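(* Let $\mathbb{K}\in\{\mathbb{R},\mathbb{C}\}$, let $X$ be a linear space over $\mathbb{K}$ and $A\colon X\to\mathbb{K}$ a nonzero additive functional, and put $\phi(x,y)=A(x)A(y)$ for $x,y\in X$. Then a function $f\colon X\to\mathbb{K}$ satisfies $f(x+y)=f(x)f(y)-\phi(x,y)$ for all $x,y\in X$ if and only if $f(x)=\delta A(x)+1$ for all $x\in X$ with $\delta\in\{1,-1\}$.
   Context: A functional $A\colon X\to\mathbb{K}$ is additive if $A(x+y)=A(x)+A(y)$ for all $x,y\in X$ (it need not be linear). *)

(* Defs.v *)
From HB Require Import structures.
From mathcomp Require Import all_boot all_order all_algebra.
From mathcomp Require Import reals.
From mathcomp Require Import complex.
Set Implicit Arguments. Unset Strict Implicit. Unset Printing Implicit Defensive.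
Import Order.TTheory GRing.Theory Num.Theory.
Local Open Scope ring_scope.

Definition additive_functional (K : nzRingType) (X : zmodType) (A : X -> K) : Prop :=
  forall x y : X, A (x + y) = A x + A y.

Definition phiA (K : nzRingType) (X : zmodType) (A : X -> K) (x y : X) : K :=
  A x * A y.

(* Main.v *)
Require Import Defs.
From HB Require Import structures.
From mathcomp Require Import all_boot all_order all_algebra.
From mathcomp Require Import reals.
From mathcomp Require Import complex.
From mathcomp Require Import ring.
Import Order.TTheory GRing.Theory Num.Theory.
Local Open Scope ring_scope.

Lemma gen (K : fieldType) (X : zmodType) (A : X -> K) :
  additive_functional A -> (exists x : X, A x != 0) ->
  forall f : X -> K,
    (forall x y : X, f (x + y) = f x * f y - phiA A x y) <->
    (exists delta : K, (delta = 1 \/ delta = -1) /\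
       forall x : X, f x = delta * A x + 1).
Proof.
move=> hA [x0 hx0] f; rewrite /phiA; split.
- move=> hf.
  have A0 : A 0 = 0.
    have := hA 0 0; rewrite addr0 => h; apply: (addrI (A 0)); by rewrite addr0 -h.
  have f00 : f 0 = 1.
    case: (eqVneq (f x0) 0) => h.
      have := hf x0 x0; rewrite h mul0r sub0r => h2.
      case: (eqVneq (f (x0 + x0)) 0) => h3.
        by move: h2; rewrite h3 => /eqP; rewrite eq_sym oppr_eq0 mulf_eq0 orbb (negbTE hx0).
      have := hf (x0 + x0) 0; rewrite addr0 A0 mulr0 subr0 => /eqP.
      rewrite -{1}[f (x0 + x0)]mulr1 => /eqP /mulfI -> //.
    have := hf x0 0; rewrite addr0 A0 mulr0 subr0 => /eqP.
    by rewrite -{1}[f x0]mulr1 => /eqP /mulfI ->.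
  set c := (f x0 - 1) / A x0.
  have lin : forall x, f x = c * A x + 1.
    move=> x.
    have e1 := hf (x + x0) x0; have e2 := hf x (x0 + x0).
    rewrite -addrA in e1; rewrite e1 hf hA in e2; rewrite hf hA in e2.
    have key : A x0 * (f x - 1) = A x * (f x0 - 1).
      apply/eqP; rewrite -subr_eq0; apply/eqP; apply: (mulfI hx0); rewrite mulr0.
      have : (f x * f x0 - A x * A x0) * f x0 - (A x + A x0) * A x0 -
             (f x * (f x0 * f x0 - A x0 * A x0) - A x * (A x0 + A x0)) = 0.
        by rewrite e2 subrr.
      move=> h; rewrite -h; ring.
    apply/eqP; rewrite -subr_eq; apply/eqP.
    by rewrite /c -[f x - 1](mulKf hx0) key; ring.
  clearbody c.
  have c2 : c * c = 1.
    have := hf x0 x0; rewrite (lin (x0+x0)) (lin x0) hA => h.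
    have : A x0 * A x0 * (c * c - 1) = 0.
      by apply/eqP; rewrite -subr_eq0; apply/eqP; rewrite -(subrr (c * (A x0 + A x0) + 1)) {1}h; ring.
    by move/eqP; rewrite !mulf_eq0 (negbTE hx0) /= subr_eq0 => /eqP.
  exists c; split=> //.
  have : (c - 1) * (c + 1) = 0 by rewrite mulrDr mulr1 mulrBl c2 mul1r; ring.
  move/eqP; rewrite mulf_eq0 subr_eq0 addr_eq0 => /orP[] /eqP; by [left|right].
- move=> [d [hd hf]] x y; rewrite !hf hA.
  have d2 : d * d = 1 by case: hd => ->; rewrite ?mulr1 ?mulrNN ?mulr1.
  transitivity (d * (A x + A y) + 1 + (d * d - 1) * (A x * A y)).
    by rewrite d2 subrr mul0r addr0.
  ring.
Qed.

Theorem mainTheorem10 (R : realType) :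
  (forall (X : lmodType R) (A : X -> R),
     additive_functional A -> (exists x : X, A x != 0) ->
     forall f : X -> R,
       (forall x y : X, f (x + y) = f x * f y - phiA A x y) <->
       (exists delta : R, (delta = 1 \/ delta = -1) /\
          forall x : X, f x = delta * A x + 1))
  /\
  (forall (X : lmodType R[i]) (A : X -> R[i]),
     additive_functional A -> (exists x : X, A x != 0) ->
     forall f : X -> R[i],
       (forall x y : X, f (x + y) = f x * f y - phiA A x y) <->
       (exists delta : R[i], (delta = 1 \/ delta = -1) /\
          forall x : X, f x = delta * A x + 1)).
Proof.
split.
  move=> X A; exact: (@gen R X A).
move=> X A; have g := @gen (R[i] : fieldType) X A; exact: g.
Qed.
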